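(* Let $P$ be the Petersen graph and $\mathcal{N}P$ its normal graph algebra over a field $\mathbb{F}$ of characteristic not $2$. The one-dimensional subspaces $\langle u\rangle$ of $U_P$ with $\mathrm{wt}(u^2)=3$ are exactly fifteen: the spans of the ten vertices $\mathbf{ij}$, and the spans of the five elements $u_1,\dots,u_5$, where $u_i=\frac12\left(\sum_{\mathbf{i}\notin \mathbf{A}}\mathbf{A}-\sum_{\mathbf{i}\in\mathbf{A}}\mathbf{A}\right)$, the sums over vertices $\mathbf{A}$ (2-subsets of $\{1,\dots,5\}$) not containing, respectively containing, $i$. The five $u_i$ form an orbit under the action of $\mathrm{Sym}(5)$.
   Context: The Petersen graph $P$ has as vertices the ten 2-element subsets $\mathbf{ij}=\{i,j\}$ of $\{1,2,3,4,5\}$, with $\mathbf{ij}$ adjacent to $\mathbf{kl}$ iff $\{i,j\}\cap\{k,l\}=\emptyset$; the edge joining them is written $\mathbf{ijkl}$. $\mathrm{Sym}(5)$ acts by permuting indices. $\mathcal{N}P=U_P\oplus\mathfrak{Z}_P$ with $U_P$ having basis the vertices and $\mathfrak{Z}_P$ basis the edges, commutative bilinear product determined by: for distinct vertices $x,y$, $xy$ equals the edge joining them if adjacent and $0$ otherwise; $x^2$ is the sum of the three edges at $x$; products involving $\mathfrak{Z}_P$ are $0$. For $\mathfrak{z}\in\mathfrak{Z}_P$, $\mathrm{wt}(\mathfrak{z})$ is the number of edges having nonzero coefficient in $\mathfrak{z}$. *)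

(* Defs.v *)
From HB Require Import structures.
From mathcomp Require Import all_boot all_order all_fingroup all_algebra.
Set Implicit Arguments. Unset Strict Implicit. Unset Printing Implicit Defensive.
Import Order.TTheory GRing.Theory Num.Theory.
Local Open Scope ring_scope.

(* Indices {1,...,5} are represented by 'I_5 = {0,...,4}. *)
Definition pvert := {A : {set 'I_5} | #|A| == 2%N}.
HB.instance Definition _ := Finite.on pvert.

Definition padj (a b : pvert) : bool := [disjoint val a & val b].

Definition is_pedge (E : {set pvert}) : bool :=
  [exists a : pvert, exists b : pvert, (E == [set a; b]) && padj a b].
Definition pedge := {E : {set pvert} | is_pedge E}.
HB.instance Definition _ := Finite.on pedge.

Notation UP F := {ffun pvert -> F}.
Notation ZP F := {ffun pedge -> F}.

Definition vtx (F : fieldType) (x : pvert) : UP F := [ffun y => (y == x)%:R].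

(* product of two basis vertices, an element of Z_P:
   x*x = sum of the edges at x; x*y = edge xy if adjacent, 0 otherwise *)
Definition bprod (F : fieldType) (a b : pvert) : ZP F :=
  [ffun e : pedge => if a == b then (a \in val e)%:R
                     else (val e == [set a; b])%:R].

Definition NPmul (F : fieldType) (u v : UP F) : ZP F :=
  [ffun e : pedge => \sum_(a : pvert) \sum_(b : pvert) u a * v b * bprod F a b e].

Definition wt (F : fieldType) (z : ZP F) : nat := #|[set e | z e != 0]|.

Definition u_el (F : fieldType) (i : 'I_5) : UP F :=
  [ffun A : pvert => if i \in val A then - (2%:R)^-1 else (2%:R)^-1].

Definition permv (s : {perm 'I_5}) (A : pvert) : pvert :=
  insubd A (s @: val A).
(* sigma . (sum_A c_A A) = sum_A c_A sigma(A) *)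
Definition actU (F : fieldType) (s : {perm 'I_5}) (u : UP F) : UP F :=
  [ffun A => u (permv s^-1 A)].

Definition scU (F : fieldType) (c : F) (u : UP F) : UP F := [ffun A => c * u A].

(* Main.v *)
Require Import Defs.
From HB Require Import structures.
From mathcomp Require Import all_boot all_order all_fingroup all_algebra.
From mathcomp Require Import ring zify.
Set Implicit Arguments. Unset Strict Implicit. Unset Printing Implicit Defensive.

Definition vtab : seq (nat*nat) := [:: (0,1);(0,2);(0,3);(0,4);(1,2);(1,3);(1,4);(2,3);(2,4);(3,4)].
Definition etab : seq (nat*nat) := [:: (0, 7); (0, 8); (0, 9); (1, 5); (1, 6); (1, 9); (2, 4); (2, 6); (2, 8); (3, 4); (3, 5); (3, 7); (4, 9); (5, 8); (6, 7)].
Definition vt i := nth (0,0) vtab i.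
Definition ep k := (nth (0,0) etab k).1.
Definition eQ k := (nth (0,0) etab k).2.
Definition memN n (p : nat*nat) := (n == p.1) || (n == p.2).
Definition nbrsN (S : seq nat) i :=
  [seq (if ep k == i then eQ k else ep k) | k <- iota 0 15 & (k \notin S) && ((ep k == i) || (eQ k == i))].
Definition growN (nb : seq (seq nat)) (L : seq (nat * bool)) :=
  undup (L ++ flatten [seq [seq (j, ~~ p.2) | j <- nth [::] nb p.1] | p <- L]).
Fixpoint reachn nb n L := match n with 0 => L | n'.+1 =>
  let L' := growN nb L in if size L' == size L then L else reachn nb n' L' end.
Definition reach nb x := reachn nb 25 [:: (x, false)].
Definition w0 l := if l == 0 then 4 else if l == 1 then 1 else 0.
Definition checkN S :=
 let nb := map (nbrsN S) (iota 0 10) in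
 let R := map (reach nb) (iota 0 10) in
 let fz := [seq (x, true) \in nth [::] R x | x <- iota 0 10] in
 [|| has (fun k => (eQ k, true) \in nth [::] R (ep k)) S,
     has (fun k => nth false fz (ep k) && nth false fz (eQ k)) S,
     all (fun i => nth false fz i) (iota 0 10),
     has (fun j => all (fun i => (i == j) || nth false fz i) (iota 0 10)) (iota 0 10) |
     has (fun l => all (fun i => (i, memN l (vt i)) \in nth [::] R (w0 l)) (iota 0 10)) (iota 0 5)].
Lemma check_all : all (fun k1 => all (fun k2 => all (fun k3 => checkN [:: k1; k2; k3])
   (iota k2.+1 (14 - k2))) (iota k1.+1 (14 - k1))) (iota 0 15).
Proof. vm_cast_no_check (erefl true). Qed.


Import GRing.Theory.
Local Open Scope ring_scope.

Lemma ep_lt k : (ep k < 10)%N.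
Proof.
rewrite /ep; case: (ltnP k 15) => hk; last by rewrite nth_default.
by move: k hk; do 15! case=> //.
Qed.
Lemma eq_lt k : (eQ k < 10)%N.
Proof.
rewrite /eQ; case: (ltnP k 15) => hk; last by rewrite nth_default.
by move: k hk; do 15! case=> //.
Qed.

Section Core.
Variables (F : fieldType) (two : (2%:R : F) != 0) (a : nat -> F) (S : seq nat).
Hypothesis HZ : forall k, (k < 15)%N -> k \notin S -> a (ep k) + a (eQ k) = 0.

Lemma nbrs_sound i j : j \in nbrsN S i -> a j = - a i.
Proof.
case/mapP => k; rewrite mem_filter mem_iota => /andP[/andP[kS hk] /andP[_ k15]] ->.
have := HZ k15 kS; case: eqP => [<-|ne] /=.
  by move/eqP; rewrite addr_eq0 => /eqP ->; rewrite opprK.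
move: hk; rewrite (negbTE (introN eqP ne)) /= => /eqP <-.
by move/eqP; rewrite addr_eq0 => /eqP.
Qed.

Definition nb := map (nbrsN S) (iota 0 10).
Lemma nb_sound i j : j \in nth [::] nb i -> a j = - a i.
Proof.
case: (ltnP i 10) => hi.
  by rewrite /nb (nth_map 0) ?size_iota // nth_iota // add0n; apply: nbrs_sound.
by rewrite nth_default // /nb size_map size_iota.
Qed.

Definition sound x (q : nat * bool) := a q.1 == (if q.2 then - a x else a x).

Lemma grow_sound x L : all (sound x) L -> all (sound x) (growN nb L).
Proof.
move=> hL; rewrite /growN all_undup all_cat hL /=.
apply/allP => q /flattenP [s /mapP [p pL ->] /mapP [j jn ->]].
have := allP hL p pL; rewrite /sound /= (nb_sound jn) => /eqP ->.
by case: p.2 => /=; rewrite ?opprK.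
Qed.

Lemma reachn_sound x n L : all (sound x) L -> all (sound x) (reachn nb n L).
Proof.
elim: n L => [|n IH] L hL //=.
case: ifP => _ //; exact/IH/grow_sound.
Qed.

Lemma reach_sound x q : q \in reach nb x -> a q.1 = if q.2 then - a x else a x.
Proof.
move=> hq; apply/eqP; move: q hq; apply/allP; apply: reachn_sound => /=.
by rewrite /sound /= eqxx.
Qed.

Lemma self_neg x : a x = - a x -> a x = 0.
Proof.
move=> h; have : a x *+ 2 = 0 by rewrite mulr2n {1}h addNr.
by rewrite -mulr_natr => /eqP; rewrite mulf_eq0 (negbTE two) orbF => /eqP.
Qed.

Lemma core :
  checkN S -> (forall k, k \in S -> a (ep k) + a (eQ k) != 0) ->
  (exists2 i, (i < 10)%N & a i != 0) ->
  (exists j, (j < 10)%N /\ exists c, forall i, (i < 10)%N -> a i = c * (i == j)%:R) \/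
  (exists l, (l < 5)%N /\ exists c, forall i, (i < 10)%N ->
      a i = c * (if memN l (vt i) then - (2%:R)^-1 else (2%:R)^-1)).
Proof.
rewrite /checkN -/nb => hc HS [i0 hi0 ai0].
set R := map (reach nb) (iota 0 10) in hc.
set fz := [seq _ | x <- _] in hc.
have HR x q : (x < 10)%N -> q \in nth [::] R x -> a q.1 = if q.2 then - a x else a x.
  by move=> hx; rewrite /R (nth_map 0) ?size_iota // nth_iota // add0n; apply: reach_sound.
have Hfz x : (x < 10)%N -> nth false fz x -> a x = 0.
  move=> hx; rewrite /fz (nth_map 0) ?size_iota // nth_iota // add0n => h.
  by apply: self_neg; have := HR x (x, true) hx h.
have inI n i : (i < n)%N -> i \in iota 0 n by rewrite mem_iota.
case/orP: hc => [|/orP[|/orP[|/orP[]]]].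
- case/hasP => k kS h; have := HR _ _ (ep_lt k) h => /= e.
  by have := HS k kS; rewrite e addrN eqxx.
- case/hasP => k kS /andP[h1 h2].
  by have := HS k kS; rewrite (Hfz _ (ep_lt k) h1) (Hfz _ (eq_lt k) h2) addr0 eqxx.
- move/allP => h; have := h i0 (inI _ _ hi0) => /(Hfz _ hi0) e.
  by rewrite e eqxx in ai0.
- case/hasP => j; rewrite mem_iota => /andP[_ hj] /allP h; left; exists j; split => //.
  exists (a j) => i hi; have := h i (inI _ _ hi).
  case: eqP => [-> _|_ /(Hfz _ hi) ->]; by rewrite ?mulr1 ?mulr0.
- case/hasP => l; rewrite mem_iota => /andP[_ hl] /allP h; right; exists l; split => //.
  have hw : (w0 l < 10)%N by rewrite /w0; case: (l == 0)%N => //; case: (l == 1)%N.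
  exists (2%:R * a (w0 l)) => i hi; have := h i (inI _ _ hi).
  move/(HR _ _ hw) => /= ->.
  have e : 2%:R * a (w0 l) * (2%:R)^-1 = a (w0 l) by rewrite mulrAC mulfV // mul1r.
  by case: memN; rewrite ?mulrN e.
Qed.
End Core.

Lemma inI n i : (i < n)%N -> i \in iota 0 n.
Proof. by rewrite mem_iota. Qed.

Lemma disj2 (T : finType) (x y : T) (B : {set T}) :
  [disjoint [set x; y] & B] = (x \notin B) && (y \notin B).
Proof.
apply/idP/andP => [H|[Hx Hy]].
  split; apply/negP => h; have := disjointFl H h; by rewrite !inE eqxx ?orbT.
rewrite disjoint_subset; apply/subsetP => z; rewrite !inE => /orP[]/eqP->; by [].
Qed.

Definition mkS (p : nat * nat) : {set 'I_5} := [set inord p.1; inord p.2].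
Lemma v0P : #|[set (ord0 : 'I_5); ord_max]| == 2%N. Proof. by rewrite cards2. Qed.
Definition v0 : pvert := exist (fun A : {set 'I_5} => #|A| == 2%N) _ v0P.
Definition vert i : pvert := insubd v0 (mkS (vt i)).

Lemma vt_ok i : (i < 10)%N -> ((vt i).1 < (vt i).2)%N && ((vt i).2 < 5)%N.
Proof. by move: i; do 10! case=> //. Qed.
Lemma vt1 i : (i < 10)%N -> ((vt i).1 < 5)%N.
Proof. by move/vt_ok/andP=> [h1 h2]; apply: ltn_trans h2. Qed.
Lemma vt2 i : (i < 10)%N -> ((vt i).2 < 5)%N.
Proof. by move/vt_ok/andP=> [h1 h2]. Qed.

Lemma inordE n m : (n < 5)%N -> (m < 5)%N -> ((inord n : 'I_5) == inord m) = (n == m).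
Proof. by move=> hn hm; rewrite -val_eqE /= !inordK. Qed.

Lemma mem_mkS n p : (n < 5)%N -> (p.1 < 5)%N -> (p.2 < 5)%N ->
  ((inord n : 'I_5) \in mkS p) = memN n p.
Proof. by move=> *; rewrite !inE !inordE. Qed.

Lemma val_vert i : (i < 10)%N -> val (vert i) = mkS (vt i).
Proof.
move=> hi; case/andP: (vt_ok hi) => h12 h2.
rewrite /vert insubdK // unfold_in /mkS cards2 inordE ?(vt1 hi) //.
by rewrite neq_ltn h12.
Qed.

Lemma vtabP : all (fun s => all (fun t => (s < t)%N ==> ((s,t) \in vtab)) (iota 0 5)) (iota 0 5).
Proof. by []. Qed.

Lemma vert_surj (x : pvert) : exists2 i, (i < 10)%N & x = vert i.
Proof.
case: x => A hA.
case/cards2P: (hA) => y [z [yz AE]].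
wlog lt : y z yz AE / (val y < val z)%N.
  move=> W; case: (ltngtP (val y) (val z)) => h.
  - exact: W h.
  - by apply: (W z y) => //; [rewrite eq_sym | rewrite AE setUC].
  - by move/val_inj: h yz => ->; rewrite eqxx.
have hz := ltn_ord z.
have hv : (val y, val z) \in vtab.
  move/allP: vtabP => /(_ (val y) (inI (ltn_trans lt hz)))/allP/(_ (val z) (inI hz)).
  by rewrite lt.
have hidx : (index (val y, val z) vtab < 10)%N by rewrite -[10%N]/(size vtab) index_mem.
exists (index (val y, val z) vtab) => //.
apply: val_inj => /=.
rewrite (val_vert hidx).
by rewrite /vt nth_index // /mkS /= !inord_val AE.
Qed.

Lemma injtab : all (fun i => all (fun j => all (fun n => memN n (vt i) == memN n (vt j)) (iota 0 5) ==> (i == j)) (iota 0 10)) (iota 0 10).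
Proof. by []. Qed.

Lemma vert_inj i j : (i < 10)%N -> (j < 10)%N -> vert i = vert j -> i = j.
Proof.
move=> hi hj e.
have hm n : (n < 5)%N -> memN n (vt i) = memN n (vt j).
  move=> hn.
  by rewrite -(mem_mkS hn (vt1 hi) (vt2 hi)) -(mem_mkS hn (vt1 hj) (vt2 hj)) -!val_vert // e.
move/allP: injtab => /(_ i (inI hi))/allP/(_ j (inI hj))/implyP h.
apply/eqP/h/allP => n; rewrite mem_iota => /andP[_ hn]; by rewrite hm.
Qed.

Lemma vert_eq i j : (i < 10)%N -> (j < 10)%N -> (vert i == vert j) = (i == j).
Proof. by move=> hi hj; apply/eqP/eqP => [/vert_inj|->]; auto. Qed.

Definition disjN (p q : nat * nat) := ~~ memN p.1 q && ~~ memN p.2 q.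

Lemma padj_vert i j : (i < 10)%N -> (j < 10)%N -> padj (vert i) (vert j) = disjN (vt i) (vt j).
Proof.
move=> hi hj; rewrite /padj !val_vert // {1}/mkS disj2.
by rewrite !mem_mkS ?(vt1 hi) ?(vt2 hi) ?(vt1 hj) ?(vt2 hj).
Qed.

Lemma etab_ok : all (fun k => disjN (vt (ep k)) (vt (eQ k))) (iota 0 15).
Proof. by []. Qed.

Lemma Epf (k : 'I_15) : is_pedge [set vert (ep k); vert (eQ k)].
Proof.
apply/existsP; exists (vert (ep k)); apply/existsP; exists (vert (eQ k)).
rewrite eqxx /= padj_vert ?ep_lt ?eq_lt //.
exact: (allP etab_ok _ (inI (ltn_ord k))).
Qed.
Definition E (k : 'I_15) : pedge := exist is_pedge _ (Epf k).

Lemma einj : all (fun k => all (fun k' => all (fun m => memN m (nth (0,0) etab k) == memN m (nth (0,0) etab k')) (iota 0 10) ==> (k == k')) (iota 0 15)) (iota 0 15).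
Proof. by []. Qed.

Lemma E_inj : injective E.
Proof.
move=> k k' e.
have e' : [set vert (ep k); vert (eQ k)] = [set vert (ep k'); vert (eQ k')] by move: (congr1 val e).
have hm m : (m < 10)%N -> memN m (nth (0,0) etab k) = memN m (nth (0,0) etab k').
  move=> hm; move/setP: e' => /(_ (vert m)).
  by rewrite /= !inE !vert_eq ?ep_lt ?eq_lt.
move/allP: einj => /(_ k (inI (ltn_ord k)))/allP/(_ k' (inI (ltn_ord k')))/implyP h.
apply/val_inj/eqP/h/allP => m; rewrite mem_iota => /andP[_ hm']; by rewrite hm.
Qed.

Lemma esurj : all (fun i => all (fun j => disjN (vt i) (vt j) ==> has (fun k => ((ep k == i) && (eQ k == j)) || ((ep k == j) && (eQ k == i))) (iota 0 15)) (iota 0 10)) (iota 0 10).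
Proof. by []. Qed.

Lemma E_surj (e : pedge) : exists k, e = E k.
Proof.
case: e => A hA; case/existsP: (hA) => x /existsP [y /andP [/eqP AE hxy]].
case: (vert_surj x) => i hi xe; case: (vert_surj y) => j hj ye; subst x y.
rewrite padj_vert // in hxy.
move/allP: esurj => /(_ i (inI hi))/allP/(_ j (inI hj))/implyP/(_ hxy)/hasP [k].
rewrite mem_iota => /andP[_ hk] h.
exists (Ordinal hk); apply: val_inj => /=; rewrite AE.
by case/orP: h => /andP[/eqP-> /eqP->] //; rewrite setUC.
Qed.

Lemma NPcoefE (F : fieldType) (u : UP F) (e : pedge) (x y : pvert) :
  x != y -> val e = [set x; y] -> NPmul u u e = (u x + u y) ^+ 2.
Proof.
move=> xy ve; have yx : y != x by rewrite eq_sym.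
have Hz a b : b \notin val e -> bprod F a b e = 0.
  move=> hb; rewrite ffunE; case: eqP => [->|ne]; first by rewrite (negbTE hb).
  by case: eqP => // he; move: hb; rewrite he !inE eqxx orbT.
have Hz' a b : a \notin val e -> bprod F a b e = 0.
  move=> ha; rewrite ffunE; case: eqP => [_|ne]; first by rewrite (negbTE ha).
  by case: eqP => // he; move: ha; rewrite he !inE eqxx.
have inner a : \sum_(b : pvert) u a * u b * bprod F a b e =
   u a * u x * bprod F a x e + u a * u y * bprod F a y e.
  rewrite (bigD1 x) //= (bigD1 y) /=; last by rewrite yx.
  by rewrite big1 ?addr0 // => b /andP[bx b_y]; rewrite Hz ?mulr0 // ve !inE negb_or bx b_y.
rewrite ffunE; under eq_bigr => a _ do rewrite inner.
rewrite (bigD1 x) //= (bigD1 y) /=; last by rewrite yx.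
rewrite big1 ?addr0 => [|a /andP[ax ay]]; last first.
  by rewrite !Hz' ?mulr0 ?addr0 // ve !inE negb_or ax ay.
rewrite !ffunE ve !eqxx (negbTE xy) (negbTE yx) !inE !eqxx ?orbT /=.
have -> : [set x; y] == [set y; x] by rewrite setUC.
rewrite [true%:R]/(1%:R) !mulr1; ring.
Qed.

Lemma card_ordQ n (Q : pred nat) : #|[set k : 'I_n | Q k]| = count Q (iota 0 n).
Proof.
rewrite -sum1_count -sum1_card.
have -> : iota 0 n = index_iota 0 n by rewrite /index_iota subn0.
by rewrite big_mkord; apply: eq_bigl => k; rewrite inE.
Qed.

Lemma epq_neq k : (k < 15)%N -> ep k != eQ k.
Proof. by move: k; do 15! case=> //. Qed.

Lemma vert_neq k : (k < 15)%N -> vert (ep k) != vert (eQ k).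
Proof. by move=> hk; rewrite vert_eq ?ep_lt ?eq_lt ?epq_neq. Qed.

Lemma wtE (F : fieldType) (u : UP F) :
  wt (NPmul u u) = count (fun k => u (vert (ep k)) + u (vert (eQ k)) != 0) (iota 0 15).
Proof.
rewrite /wt -card_ordQ.
have -> : [set e | NPmul u u e != 0] =
    E @: [set k : 'I_15 | u (vert (ep k)) + u (vert (eQ k)) != 0].
  apply/setP => e; case: (E_surj e) => k ->.
  rewrite mem_imset; last exact: E_inj.
  by rewrite !inE (NPcoefE _ (vert_neq (ltn_ord k))) // sqrf_eq0.
by rewrite card_imset //; exact: E_inj.
Qed.

Lemma star_cnt : all (fun j => count (fun k => (ep k == j) || (eQ k == j)) (iota 0 15) == 3%N) (iota 0 10).
Proof. by []. Qed.
Lemma uel_both : all (fun l => all (fun k => ~~ (memN l (vt (ep k)) && memN l (vt (eQ k)))) (iota 0 15)) (iota 0 5).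
Proof. by []. Qed.
Lemma uel_cnt : all (fun l => count (fun k => ~~ memN l (vt (ep k)) && ~~ memN l (vt (eQ k))) (iota 0 15) == 3%N) (iota 0 5).
Proof. by []. Qed.

Definition mkV (x y : 'I_5) : pvert := insubd v0 [set x; y].
Lemma val_mkV x y : x != y -> val (mkV x y) = [set x; y].
Proof. by move=> xy; rewrite /mkV insubdK // unfold_in cards2 xy. Qed.

Lemma mem_mkS' (l : 'I_5) p : (p.1 < 5)%N -> (p.2 < 5)%N -> (l \in mkS p) = memN l p.
Proof. by move=> *; rewrite -{1}(inord_val l) mem_mkS. Qed.

Lemma actU_uel (F : fieldType) (s : {perm 'I_5}) i : actU s (u_el F i) = u_el F (s i).
Proof.
apply/ffunP => A; rewrite !ffunE.
have -> : val (permv s^-1 A) = (s^-1)%g @: val A.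
  rewrite /permv insubdK // unfold_in card_imset ?(valP A) //; exact: perm_inj.
have -> : (i \in (s^-1)%g @: val A) = (s i \in val A).
  by rewrite -{1}(permK s i) mem_imset //; exact: perm_inj.
by [].
Qed.

Lemma other_vert (x : pvert) : exists y, y != x.
Proof.
exists (if x == vert 0 then vert 1 else vert 0).
case: (x =P vert 0) => [->|]; first by rewrite vert_eq.
by move/eqP; rewrite eq_sym.
Qed.

Unset Implicit Arguments.

Theorem lemma10p1 (F : fieldType) (char2 : (2%:R : F) != 0) :
  (forall u : UP F, u != 0 ->
     (wt (NPmul u u) = 3%N <->
        (exists x : pvert, exists c : F, u = scU c (vtx F x)) \/
        (exists i : 'I_5, exists c : F, u = scU c (u_el F i))))
  /\ (forall x y : pvert, forall c : F, vtx F x = scU c (vtx F y) -> x = y)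
  /\ (forall i j : 'I_5, forall c : F, u_el F i = scU c (u_el F j) -> i = j)
  /\ (forall (x : pvert) (i : 'I_5) (c : F), vtx F x != scU c (u_el F i))
  /\ (forall (x : pvert) (i : 'I_5) (c : F), u_el F i != scU c (vtx F x))
  /\ (forall (s : {perm 'I_5}) (i : 'I_5), exists j : 'I_5, actU s (u_el F i) = u_el F j)
  /\ (forall i j : 'I_5, exists s : {perm 'I_5}, actU s (u_el F i) = u_el F j).
Proof.
have h2 : (2%:R : F)^-1 != 0 by rewrite invr_eq0.
have hh : (2%:R : F)^-1 + (2%:R)^-1 = 1.
  by field.
split.
{ move=> u u0; split => [hw|].
  - set S := filter (fun k => u (vert (ep k)) + u (vert (eQ k)) != 0) (iota 0 15).
    have sS : size S = 3%N by rewrite size_filter -wtE.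
    have srt : sorted ltn S.
      by apply: sorted_filter; [exact: ltn_trans | exact: iota_ltn_sorted].
    have memS k : (k \in S) = (k < 15)%N && (u (vert (ep k)) + u (vert (eQ k)) != 0).
      by rewrite mem_filter mem_iota leq0n add0n andbC.
    have chk : checkN S.
      move: memS; case: S sS srt => [|k1 [|k2 [|k3 [|]]]] //= _ /andP[l12 /andP[l23 _]] memS.
      have h3 : (k3 < 15)%N by have := memS k3; rewrite !inE eqxx !orbT => /esym/andP[].
      move/allP: check_all => /(_ k1); rewrite mem_iota => /(_ ltac:(apply/andP; split; lia)).
      move/allP => /(_ k2); rewrite mem_iota => /(_ ltac:(apply/andP; split; lia)).
      move/allP => /(_ k3); rewrite mem_iota => /(_ ltac:(apply/andP; split; lia)).
      by [].
    have [x ux] : exists x, u x != 0.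
      apply/existsP; apply: contraR u0 => /existsPn H.
      apply/eqP/ffunP => x; rewrite ffunE; apply/eqP; move: (H x); by rewrite negbK.
    case: (vert_surj x) => i0 hi0 xe; subst x.
    have HZ k : (k < 15)%N -> k \notin S -> u (vert (ep k)) + u (vert (eQ k)) = 0.
      by move=> hk; rewrite memS hk /= negbK => /eqP.
    have HS k : k \in S -> u (vert (ep k)) + u (vert (eQ k)) != 0.
      by rewrite memS => /andP[].
    have Hnz : exists2 i, (i < 10)%N & u (vert i) != 0 by exists i0.
    case: (@core F char2 (fun i => u (vert i)) S HZ chk HS Hnz).
    + case=> j [hj [c hc]]; left; exists (vert j), c.
      apply/ffunP => x; case: (vert_surj x) => i hi ->; rewrite !ffunE hc // vert_eq //.
    + case=> l [hl [c hc]]; right; exists (inord l), c.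
      apply/ffunP => x; case: (vert_surj x) => i hi ->.
      by rewrite !ffunE hc // val_vert // mem_mkS ?(vt1 hi) ?(vt2 hi).
  - case => [[x [c ue]]|[l [c ue]]].
    + have c0 : c != 0.
        apply: contraNneq u0 => c0; apply/eqP/ffunP => y; by rewrite ue !ffunE c0 mul0r.
      case: (vert_surj x) => j hj xe; subst x.
      rewrite wtE (@eq_in_count _ _ (fun k => (ep k == j) || (eQ k == j))).
        by move/allP: star_cnt => /(_ j (inI hj))/eqP.
      move=> k; rewrite mem_iota => /andP[_ hk].
      rewrite ue !ffunE !vert_eq ?ep_lt ?eq_lt //.
      have := epq_neq hk.
      case: (ep k =P j) => [e1|_]; case: (eQ k =P j) => [e2|_] //=.
      * by rewrite e1 e2 eqxx.
      * by rewrite mulr1 mulr0 addr0.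
      * by rewrite mulr1 mulr0 add0r.
      * by rewrite mulr0 addr0 eqxx.
    + have c0 : c != 0.
        apply: contraNneq u0 => c0; apply/eqP/ffunP => y; by rewrite ue !ffunE c0 mul0r.
      rewrite wtE (@eq_in_count _ _ (fun k => ~~ memN l (vt (ep k)) && ~~ memN l (vt (eQ k)))).
        by move/allP: uel_cnt => /(_ l (inI (ltn_ord l)))/eqP.
      move=> k; rewrite mem_iota => /andP[_ hk].
      rewrite ue !ffunE !val_vert ?ep_lt ?eq_lt // !mem_mkS' ?(vt1 (ep_lt k)) ?(vt2 (ep_lt k)) ?(vt1 (eq_lt k)) ?(vt2 (eq_lt k)) //.
      move/allP: uel_both => /(_ l (inI (ltn_ord l)))/allP/(_ k (inI hk)).
      case: memN; case: memN => //= _.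
      * by rewrite mulrN addNr eqxx.
      * by rewrite mulrN addrN eqxx.
      * by rewrite -mulrDr hh mulr1. }
split.
{ move=> x y c /ffunP/(_ x); rewrite !ffunE eqxx.
  case: (x =P y) => // _; rewrite mulr0 => /eqP; by rewrite oner_eq0. }
split.
{ move=> i j c e; apply/eqP; apply: contraT => ij.
  have : (0 < #|~: [set i; j]|)%N.
    by rewrite -(leq_add2l #|[set i; j]|) cardsC cards2 ij card_ord.
  case/card_gt0P => k; rewrite !inE negb_or => /andP[ki kj].
  move/ffunP: e => e.
  have e1 := e (mkV i j); have e2 := e (mkV i k).
  rewrite !ffunE !val_mkV // 1?eq_sym // !inE !eqxx /= ?orbT in e1 e2.
  rewrite eq_sym (negbTE ij) (eq_sym j k) (negbTE kj) /= in e2.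
  move: e1; rewrite mulrN => /oppr_inj e1.
  have e3 : - (2%:R : F)^-1 = (2%:R)^-1 by rewrite e2 -e1.
  move: hh; rewrite -{1}e3 addNr => /eqP; by rewrite eq_sym oner_eq0. }
split.
{ move=> x i c; apply/eqP => /ffunP e.
  case: (other_vert x) => y yx.
  have := e y; rewrite !ffunE (negbTE yx) => /esym/eqP; rewrite mulf_eq0 => /orP[/eqP c0|].
    by have := e x; rewrite !ffunE eqxx c0 mul0r => /eqP; rewrite oner_eq0.
  by case: ifP; rewrite ?oppr_eq0 (negbTE h2). }
split.
{ move=> x i c; apply/eqP => /ffunP e.
  case: (other_vert x) => y yx.
  have := e y; rewrite !ffunE (negbTE yx) mulr0.
  by case: ifP => _ /eqP; rewrite ?oppr_eq0 (negbTE h2). }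
split.
{ by move=> s i; exists (s i); rewrite actU_uel. }
by move=> i j; exists (tperm i j); rewrite actU_uel tpermL.
Qed.
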